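(* If the graph $G=([k],E)$ is realisable in $\mathbb{R}^d$ with profile $\boldsymbol\lambda$ and $\lambda_i\ge 2$ for every $i\in[k]$, then $\zeta(G,\boldsymbol\lambda)\le\frac58 d+\frac18 k$.
   Context: A sphere of dimension $\ell$ in $\mathbb{R}^d$ ($0\le\ell\le d-1$) is the set of points of an $(\ell+1)$-dimensional affine subspace at a fixed positive distance from a fixed point of that subspace. For finite sets $P_1,\dots,P_k\subset\mathbb{R}^d$, the profile of $(P_1,\dots,P_k)$ is $\boldsymbol\lambda=(\lambda_1,\dots,\lambda_k)$, where $\lambda_i=0$ if $|P_i|\le 3$, and otherwise $\lambda_i$ is the smallest $\ell$ such that some sphere of dimension $\ell$ contains $P_i$, with $\lambda_i=d$ if no sphere contains $P_i$. A graph $G=([k],E)$ is compatible with $(P_1,\dots,P_k)$ if $\|p-p'\|=1$ for every edge $\{i,j\}\in E$ and all $p\in P_i$, $p'\in P_j$. $G$ is realisable in $\mathbb{R}^d$ with profile $\boldsymbol\lambda$ if there exist finite sets $P_1,\dots,P_k\subset\mathbb{R}^d$ with profile $\boldsymbol\lambda$ that are compatible with $G$. For $i\in[k]$ let $V_i=\{j\in[k]\setminus\{i\}:\{i,j\}\notin E\}$. $\zeta(G,\boldsymbol\lambda)$ denotes the optimum value of the linear program: minimize $\sum_{i\in[k]}\lambda_ix_i$ over $\mathbf{x}\in\mathbb{R}^k$ subject to $x_i\ge 0$ and $\lambda_ix_i+\sum_{j\in V_i}x_j\ge 1$ for all $i\in[k]$. *)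

(* Defs.v *)
From HB Require Import structures.
From mathcomp Require Import all_boot all_order all_algebra.
From mathcomp Require Import finmap.
From mathcomp Require Import classical_sets reals.
Set Implicit Arguments. Unset Strict Implicit. Unset Printing Implicit Defensive.
Import Order.TTheory GRing.Theory Num.Theory.
Local Open Scope ring_scope.


Section Defs.
Variable R : realType.

Definition eucl_norm (d : nat) (v : 'rV[R]_d) : R :=
  Num.sqrt (\sum_(i < d) v 0 i ^+ 2).

(* A sphere of dimension l: centre c, (l+1)-dimensional direction space = row space
   of V (rank l+1), radius r > 0.  The sphere is {c + v | v in rowspace V, |v| = r}.
   [in_sphere_dim l A] : some sphere of dimension l contains A. *)
Definition in_sphere_dim (d l : nat) (A : {fset 'rV[R]_d}) : Prop :=
  exists (c : 'rV[R]_d) (V : 'M[R]_(l.+1, d)) (r : R),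
    [/\ \rank V = l.+1, 0 < r &
        forall p, p \in A -> ((p - c) <= V)%MS /\ eucl_norm (p - c) = r].

(* lambda is the profile value of A: 0 if |A| <= 3, else the least l (0 <= l <= d-1)
   such that some sphere of dimension l contains A, and d if there is none. *)
Definition profile_value (d : nat) (A : {fset 'rV[R]_d}) (lam : nat) : Prop :=
  if (#|` A|%fset <= 3)%N then lam = 0%N
  else [/\ (lam <= d)%N,
           (lam < d)%N -> in_sphere_dim lam A &
           forall l, (l < lam)%N -> ~ in_sphere_dim l A].

Definition has_profile (d k : nat) (P : 'I_k -> {fset 'rV[R]_d}) (lam : 'I_k -> nat) :=
  forall i, profile_value (P i) (lam i).

Definition compatible (d k : nat) (E : rel 'I_k) (P : 'I_k -> {fset 'rV[R]_d}) :=
  forall i j, E i j -> forall p p', p \in P i -> p' \in P j -> eucl_norm (p - p') = 1.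

Definition realisable (d k : nat) (E : rel 'I_k) (lam : 'I_k -> nat) :=
  exists P : 'I_k -> {fset 'rV[R]_d}, has_profile P lam /\ compatible E P.

Definition nonnbrs (k : nat) (E : rel 'I_k) (i : 'I_k) : {set 'I_k} :=
  [set j | (j != i) && ~~ E i j].

Definition lp_feasible (k : nat) (E : rel 'I_k) (lam : 'I_k -> nat) (x : 'I_k -> R) :=
  forall i, 0 <= x i /\ 1 <= (lam i)%:R * x i + \sum_(j in nonnbrs E i) x j.

Definition lp_objective (k : nat) (lam : 'I_k -> nat) (x : 'I_k -> R) : R :=
  \sum_(i < k) (lam i)%:R * x i.

Definition zeta (k : nat) (E : rel 'I_k) (lam : 'I_k -> nat) : R :=
  inf [set lp_objective lam x | x in lp_feasible E lam].
End Defs.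

(* Main.v *)
Require Import Defs.
From HB Require Import structures.
From mathcomp Require Import all_boot all_order all_algebra.
From mathcomp Require Import finmap.
From mathcomp Require Import classical_sets reals.
From mathcomp Require Import ring lra.
From Stdlib Require Import Classical.
Set Implicit Arguments. Unset Strict Implicit. Unset Printing Implicit Defensive.
Import Order.TTheory GRing.Theory Num.Theory.
Local Open Scope ring_scope.


Inductive fm_cone (R : realFieldType) (I : Type) (rw : I -> (nat -> R) * R) :
  (nat -> R) * R -> Prop :=
| fm_cgen i : fm_cone rw (rw i)
| fm_cadd r1 r2 : fm_cone rw r1 -> fm_cone rw r2 ->
    fm_cone rw (fun j => r1.1 j + r2.1 j, r1.2 + r2.2)
| fm_cscale (c : R) r : 0 <= c -> fm_cone rw r -> fm_cone rw (fun j => c * r.1 j, c * r.2)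
| fm_cext r r' : (forall j, r.1 j = r'.1 j) -> r.2 = r'.2 -> fm_cone rw r -> fm_cone rw r'.

Lemma fm_cone_trans (R : realFieldType) (I J : Type) (rw : I -> (nat -> R) * R)
  (rw' : J -> (nat -> R) * R) :
  (forall j, fm_cone rw (rw' j)) -> forall r, fm_cone rw' r -> fm_cone rw r.
Proof.
move=> H r; elim=> {r}.
- by [].
- by move=> r1 r2 _ H1 _ H2; apply: fm_cadd.
- by move=> c r c0 _ H1; apply: fm_cscale.
- by move=> r r' H1 H2 _ H3; apply: fm_cext H3.
Qed.

Lemma fm_sep (R : realFieldType) (I : finType) (A B : pred I) (L U : I -> R) :
  (forall a b, A a -> B b -> L a <= U b) ->
  exists t, (forall a, A a -> L a <= t) /\ (forall b, B b -> t <= U b).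
Proof.
move=> H.
case: (pickP A) => [a0 Aa0 | A0].
  case: (@arg_maxP _ R I a0 A L Aa0) => i Ai Hi.
  exists (L i); split; first by move=> a Aa; apply: Hi.
  by move=> b Bb; apply: H.
case: (pickP B) => [b0 Bb0 | B0].
  case: (@arg_minP _ R I b0 B U Bb0) => i Bi Hi.
  exists (U i); split; last by move=> b Bb; apply: Hi.
  by move=> a; rewrite A0.
by exists 0; split=> [a|b]; [rewrite A0|rewrite B0].
Qed.


Lemma fm_zero (R : realFieldType) (I : Type) (rw : I -> (nat -> R) * R) (i : I) :
  fm_cone rw (fun _ => 0, 0).
Proof.
apply: (fm_cext _ _ (fm_cscale (c:=0) (lexx 0) (fm_cgen rw i))) => [j|] /=; by rewrite mul0r.
Qed.

Lemma fm_main (R : realFieldType) (n : nat) : forall (I : finType) (rw : I -> (nat -> R) * R),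
  (forall i j, (n <= j)%N -> (rw i).1 j = 0) ->
  (forall x : nat -> R, exists i, \sum_(j < n) (rw i).1 j * x j < (rw i).2) ->
  exists b, 0 < b /\ fm_cone rw (fun _ => 0, b).
Proof.
elim: n => [|n IH] I rw Hsup Hinf.
  have [i Hi] := Hinf (fun _ => 0).
  rewrite big_ord0 in Hi.
  exists (rw i).2; split => //.
  by apply: (fm_cext _ _ (fm_cgen rw i)) => // j; rewrite Hsup.
pose c i := (rw i).1 n.
pose zr : (nat -> R) * R := (fun _ => 0, 0).
pose rw' (u : (I + (I * I))%type) : (nat -> R) * R :=
  match u with
  | inl i => if c i == 0 then rw i else zr
  | inr (p, q) => if (0 < c p) && (c q < 0) then
       (fun j => (- c q) * (rw p).1 j + c p * (rw q).1 j,
        (- c q) * (rw p).2 + c p * (rw q).2) else zr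
  end.
have Hsup' : forall u j, (n <= j)%N -> (rw' u).1 j = 0.
  move=> [i|[p q]] j; rewrite leq_eqVlt => /orP [/eqP <-|Hj] /=.
  - by case: ifP => [/eqP|//].
  - by case: ifP => // _; rewrite Hsup.
  - by case: ifP => // _; rewrite /c /=; ring.
  - by case: ifP => // _; move: (Hsup p j Hj) (Hsup q j Hj) => /= -> ->; rewrite !mulr0 addr0.
have Hinf' : forall x : nat -> R, exists u, \sum_(j < n) (rw' u).1 j * x j < (rw' u).2.
  move=> x; case: (classic (exists u, \sum_(j < n) (rw' u).1 j * x j < (rw' u).2)) => // Hno.
  have Hge : forall u, (rw' u).2 <= \sum_(j < n) (rw' u).1 j * x j.
    by move=> u; rewrite leNgt; apply/negP => H; apply: Hno; exists u.
  pose s i := \sum_(j < n) (rw i).1 j * x j.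
  have Hpq : forall p q, 0 < c p -> c q < 0 ->
      ((rw p).2 - s p) / c p <= ((rw q).2 - s q) / c q.
    move=> p q Hp Hq.
    have := Hge (inr (p, q)); rewrite /= Hp Hq /=.
    rewrite (eq_bigr (fun j : 'I_n => (- c q) * ((rw p).1 j * x j) + c p * ((rw q).1 j * x j)));
      last by move=> j _; rewrite mulrDl !mulrA.
    rewrite big_split /= -!mulr_sumr -/(s p) -/(s q) => H.
    set u := _ / c q.
    have Hu : u * c q = (rw q).2 - s q by rewrite /u divfK // ltr0_neq0.
    rewrite ler_pdivrMr //.
    nra.
  have [t [Ht1 Ht2]] := fm_sep (A := fun i => 0 < c i) (B := fun i => c i < 0) Hpq.
  pose x' j := if j == n then t else x j.
  have [i Hi] := Hinf x'.
  rewrite big_ord_recr /= /x' eqxx in Hi.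
  rewrite (eq_bigr (fun j : 'I_n => (rw i).1 j * x j)) in Hi; last first.
    by move=> j _; rewrite (ltn_eqF (ltn_ord j)).
  rewrite -/(s i) -/(c i) in Hi.
  exfalso; case: (ltrgtP (c i) 0) => Hc.
  - have := Ht2 i Hc.
    set u := _ / c i => Htu.
    have Hu : u * c i = (rw i).2 - s i by rewrite /u divfK // ltr0_neq0.
    move: Hi; apply/negP; rewrite -leNgt. nra.
  - have := Ht1 i Hc.
    set u := _ / c i => Htu.
    have Hu : u * c i = (rw i).2 - s i by rewrite /u divfK // gt_eqF.
    move: Hi; apply/negP; rewrite -leNgt. nra.
  - have := Hge (inl i); rewrite /= Hc eqxx => H.
    move: Hi; apply/negP; rewrite -leNgt Hc mul0r addr0. exact H.
have [b [b0 Hb]] := IH _ rw' Hsup' Hinf'.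
exists b; split => //.
apply: (fm_cone_trans _ Hb) => -[i|[p q]] /=.
  case: ifP => _; [exact: fm_cgen | exact: fm_zero i].
case: ifP => [/andP [Hp Hq]|_]; last exact: fm_zero p.
apply: (fm_cext _ _ (fm_cadd (fm_cscale (c := - c q) _ (fm_cgen rw p))
                              (fm_cscale (c := c p) _ (fm_cgen rw q)))) => //.
- by rewrite oppr_ge0 ltW.
- by rewrite ltW.
Qed.


Definition gclique (k : nat) (E : rel 'I_k) (C : {set 'I_k}) :=
  forall i j, i \in C -> j \in C -> i != j -> E i j.

Lemma sum_sub_le (R : realFieldType) (T : finType) (A B : {set T}) (F : T -> R) :
  (forall i, 0 <= F i) -> A \subset B -> \sum_(i in A) F i <= \sum_(i in B) F i.
Proof.
move=> F0 AB.
rewrite [X in _ <= X](bigID (fun i => i \in A)) /=.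
have -> : \sum_(i in B | i \in A) F i = \sum_(i in A) F i.
  apply: eq_bigl => i; rewrite andb_idl //; by move/(fintype.subsetP AB).
by rewrite lerDl sumr_ge0.
Qed.

Lemma real_step (R : realFieldType) (l y s n : R) :
  2 <= l -> 0 <= y -> 0 <= n -> l * y + s <= l -> s <= n * y ->
  (l + n) * (y + s) <= (1 + n) * l.
Proof.
move=> l2 y0 n0 H1 H2.
have h1 : 0 <= (l - 1) * (n * y - s) by apply: mulr_ge0; lra.
have h2 : 0 <= (1 + n) * (l - l * y - s) by apply: mulr_ge0; lra.
nra.
Qed.

Lemma real_step2 (R : realFieldType) (l y s n D : R) :
  2 <= l -> 0 <= y -> 0 <= n -> l * y + s <= l -> s <= n * y -> l <= D ->
  y + s <= (5 * D + 1 + n) / 8.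
Proof.
move=> l2 y0 n0 H1 H2 lD.
have h := real_step l2 y0 n0 H1 H2.
have ln : 0 < l + n by lra.
have h3 : 8 * ((1 + n) * l) <= (5 * D + 1 + n) * (l + n).
  have : 0 <= (n - l) ^+ 2 by apply: sqr_ge0.
  nra.
rewrite ler_pdivlMr //.
have : (y + s) * 8 * (l + n) <= (5 * D + 1 + n) * (l + n) by nra.
by rewrite ler_pM2r.
Qed.

Lemma dual_bound (R : realFieldType) (k : nat) (E : rel 'I_k) (lam : 'I_k -> nat)
  (y : 'I_k -> R) :
  symmetric E -> irreflexive E -> (forall i, (2 <= lam i)%N) ->
  (forall i, 0 <= y i) ->
  (forall j, (lam j)%:R * y j + \sum_(i in nonnbrs E j) y i <= (lam j)%:R) ->
  forall n (S : {set 'I_k}) (D : R), (#|S| <= n)%N -> 0 <= D ->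
  (forall C : {set 'I_k}, C \subset S -> (1 < #|C|)%N -> gclique E C ->
     \sum_(i in C) ((lam i)%:R + 1) <= D) ->
  (forall i, i \in S -> (lam i)%:R <= D) ->
  \sum_(i in S) y i <= (5 * D + #|S|%:R) / 8.
Proof.
move=> Esym Eirr lam2 y0 Hdual.
elim=> [|n IH] S D HSn D0 Hcl Hsing.
  move: HSn; rewrite leqn0 cards_eq0 => /eqP ->.
  by rewrite big_set0 cards0 addr0 divr_ge0 // mulr_ge0.
case: (set_0Vmem S) => [->|[i0 i0S]].
  by rewrite big_set0 cards0 addr0 divr_ge0 // mulr_ge0.
pose c := [arg max_(i > i0 in S) y i]%O.
have [cS cmax] : c \in S /\ forall j, j \in S -> y j <= y c.
  rewrite /c; case: (@arg_maxP _ R _ i0 (fun i => i \in S) y i0S) => i iS Hi.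
  by split => // j jS; apply: Hi.
pose M := S :&: nonnbrs E c.
pose N := S :&: [set j | E c j].
have HSsum : \sum_(i in S) y i = y c + \sum_(i in M) y i + \sum_(i in N) y i.
  rewrite (big_setD1 c cS) /= -addrA; congr (_ + _).
  rewrite (bigID (fun i => E c i)) /= addrC; congr (_ + _).
    apply: eq_bigl => i; rewrite /M /nonnbrs !inE.
    case: (i == c) => //=; by rewrite andbC.
  apply: eq_bigl => i; rewrite /N !inE.
  case: (boolP (i == c)) => [/eqP ->|] /=; first by rewrite Eirr andbF.
  by rewrite andbC.
have HScard : #|S| = (1 + #|M| + #|N|)%N.
  rewrite (cardsD1 c S) cS -addnA; congr (_ + _)%N.
  have -> : S :\ c = M :|: N.
    apply/setP => i; rewrite /M /N /nonnbrs !inE.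
    case: (boolP (i == c)) => [/eqP ->|] /=; first by rewrite Eirr !andbF.
    by case: (E c i); rewrite !andbT ?andbF ?orbF.
  rewrite cardsU.
  have -> : M :&: N = finset.set0.
    apply/setP => i; rewrite /M /N /nonnbrs !inE.
    by case: (E c i); rewrite ?andbF ?andbT.
  by rewrite cards0 subn0.
set s := \sum_(i in M) y i.
have hs1 : (lam c)%:R * y c + s <= (lam c)%:R.
  apply: le_trans (Hdual c); rewrite lerD2l.
  by apply: sum_sub_le => //; apply: subsetIr.
have hs2 : s <= #|M|%:R * y c.
  rewrite /s mulr_natl -sumr_const.
  apply: ler_sum => i; rewrite inE => /andP [iS _]; exact: cmax.
have l2 : 2 <= (lam c)%:R :> R by rewrite (ler_nat R 2); exact: lam2.
case: (set_0Vmem N) => [N0|[j0 j0N]].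
  rewrite HSsum N0 big_set0 addr0.
  rewrite HScard N0 cards0 addn0 natrD.
  have := real_step2 l2 (y0 c) (ler0n _ #|M|) hs1 hs2 (Hsing c cS).
  by rewrite addrA.
have cj0 : E c j0 by move: j0N; rewrite !inE => /andP [].
have j0S : j0 \in S by move: j0N; rewrite !inE => /andP [].
pose D' := D - ((lam c)%:R + 1).
have Hpair : forall j, j \in N ->
    ((lam c)%:R + 1) + ((lam j)%:R + 1) <= D.
  move=> j jN.
  have cjE : E c j by move: jN; rewrite !inE => /andP [].
  have jS : j \in S by move: jN; rewrite !inE => /andP [].
  have cj : c != j by apply: contraTneq cjE => ->; rewrite Eirr.
  have := Hcl [set c; j].
  rewrite big_setU1 ?inE // big_set1 cards2 cj; apply => //.
    by apply/fintype.subsetP => x; rewrite !inE => /orP [] /eqP ->.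
  move=> a b; rewrite !inE => /orP [] /eqP -> /orP [] /eqP ->; rewrite ?eqxx //.
  by rewrite Esym.
have D'0 : 0 <= D'.
  have := Hpair j0 j0N; have := ler0n R (lam j0); rewrite /D'; lra.
have HN : (#|N| <= n)%N.
  by move: HSn; rewrite HScard -addnA add1n ltnS; apply: leq_trans; apply: leq_addl.
have IHN := IH N D' HN D'0.
have Hrec : \sum_(i in N) y i <= (5 * D' + #|N|%:R) / 8.
  apply: IHN.
  - move=> C CN C1 HC.
    have cC : c \notin C.
      apply/negP => /(fintype.subsetP CN); rewrite !inE Eirr => /andP [].
      by [].
    have := Hcl (c |: C).
    rewrite big_setU1 // cardsU1 cC /=.
    rewrite /D' => H; have : (lam c)%:R + 1 + \sum_(i in C) ((lam i)%:R + 1) <= D.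
      apply: H.
      - apply/fintype.subsetP => x; rewrite !inE => /orP [/eqP -> //|].
        by move/(fintype.subsetP CN); rewrite inE => /andP [].
      - by rewrite add1n ltnS ltnW.
      - move=> a b; rewrite !inE => /orP [/eqP ->|aC] /orP [/eqP ->|bC]; rewrite ?eqxx //.
        + by move=> _; move: (fintype.subsetP CN b bC); rewrite !inE => /andP [].
        + by move=> _; move: (fintype.subsetP CN a aC); rewrite !inE Esym => /andP [].
        + exact: HC.
    lra.
  - move=> j jN; have := Hpair j jN; rewrite /D'; lra.
have Hst := real_step2 l2 (y0 c) (ler0n _ #|M|) hs1 hs2 (lexx _).
rewrite HSsum HScard !natrD.
move: Hrec Hst; rewrite -/s /D'; lra.
Qed.


Definition fm_ext (R : realFieldType) (k : nat) (f : 'I_k -> R) : nat -> R :=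
  fun j => if @insub nat (fun j => (j < k)%N) 'I_k j is Some j' then f j' else 0.

Arguments fm_ext : simpl never.

Lemma fm_extE (R : realFieldType) (k : nat) (f : 'I_k -> R) (j : 'I_k) :
  fm_ext f j = f j.
Proof. by rewrite /fm_ext valK. Qed.

Lemma fm_ext0 (R : realFieldType) (k : nat) (f : 'I_k -> R) (j : nat) :
  (k <= j)%N -> fm_ext f j = 0.
Proof. by move=> kj; rewrite /fm_ext insubF // ltnNge kj. Qed.

Lemma fm_ext_sum (R : realFieldType) (k : nat) (f : 'I_k -> R) (x : nat -> R) :
  \sum_(j < k) fm_ext f j * x j = \sum_(j < k) f j * x j.
Proof. by apply: eq_bigr => j _; rewrite fm_extE. Qed.

Definition lpA (R : realFieldType) (k : nat) (E : rel 'I_k) (lam : 'I_k -> nat) (i j : 'I_k) : R :=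
  (if j == i then (lam i)%:R else 0) + (if j \in nonnbrs E i then 1 else 0).

Definition lprow (R : realFieldType) (k : nat) (E : rel 'I_k) (lam : 'I_k -> nat) (B : R)
  (u : ('I_k + 'I_k) + unit) : (nat -> R) * R :=
  match u with
  | inl (inl i) => (fm_ext (fun j : 'I_k => if j == i then 1 else 0), 0)
  | inl (inr i) => (fm_ext (lpA R E lam i), 1)
  | inr _ => (fm_ext (fun j : 'I_k => - (lam j)%:R), - B)
  end.

Definition lprep (R : realFieldType) (k : nat) (E : rel 'I_k) (lam : 'I_k -> nat) (B : R)
  (r : (nat -> R) * R) :=
  exists (yy nu : 'I_k -> R) (mu : R),
    [/\ (forall i, 0 <= yy i), (forall i, 0 <= nu i), 0 <= mu,
        (forall j : 'I_k, r.1 j = nu j + \sum_i yy i * lpA R E lam i j - mu * (lam j)%:R) &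
        r.2 = \sum_i yy i - mu * B].

Lemma lprep_cone (R : realFieldType) (k : nat) (E : rel 'I_k) (lam : 'I_k -> nat) (B : R) r :
  fm_cone (lprow E lam B) r -> lprep E lam B r.
Proof.
elim=> {r}.
- move=> [[i|i]|t] /=.
  + exists (fun _ => 0), (fun j => if j == i then 1 else 0), 0; split => //.
    * by move=> j; case: ifP.
    * move=> j /=; rewrite fm_extE big1 ?mul0r ?subr0 ?addr0 // => l _; by rewrite mul0r.
    * by rewrite big1 ?mul0r ?subr0.
  + exists (fun j => if j == i then 1 else 0), (fun _ => 0), 0; split => //.
    * by move=> j; case: ifP.
    * move=> j /=; rewrite fm_extE mul0r subr0 add0r (bigD1 i) //= eqxx mul1r big1 ?addr0 //.
      by move=> l /negbTE ->; rewrite mul0r.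
    * rewrite (bigD1 i) //= eqxx big1 ?addr0 ?mul0r ?subr0 //.
      by move=> l /negbTE ->.
  + exists (fun _ => 0), (fun _ => 0), 1; split => //.
    * move=> j /=; rewrite fm_extE big1 ?add0r ?mul1r ?sub0r // => l _; by rewrite mul0r.
    * by rewrite big1 ?mul1r ?sub0r.
- move=> r1 r2 _ [y1 [n1 [m1 [Hy1 Hn1 Hm1 H11 H12]]]] _ [y2 [n2 [m2 [Hy2 Hn2 Hm2 H21 H22]]]].
  exists (fun i => y1 i + y2 i), (fun i => n1 i + n2 i), (m1 + m2); split.
  + by move=> i; rewrite addr_ge0.
  + by move=> i; rewrite addr_ge0.
  + by rewrite addr_ge0.
  + move=> j /=; rewrite H11 H21.
    have -> : \sum_(i < k) (y1 i + y2 i) * lpA R E lam i j =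
        \sum_i y1 i * lpA R E lam i j + \sum_i y2 i * lpA R E lam i j.
      by rewrite -big_split; apply: eq_bigr => i _; rewrite mulrDl.
    ring.
  + rewrite /= H12 H22 big_split /=; ring.
- move=> c r c0 _ [y1 [n1 [m1 [Hy1 Hn1 Hm1 H11 H12]]]].
  exists (fun i => c * y1 i), (fun i => c * n1 i), (c * m1); split.
  + by move=> i; rewrite mulr_ge0.
  + by move=> i; rewrite mulr_ge0.
  + by rewrite mulr_ge0.
  + move=> j /=; rewrite H11.
    have -> : \sum_(i < k) (c * y1 i) * lpA R E lam i j =
        c * \sum_i y1 i * lpA R E lam i j.
      by rewrite mulr_sumr; apply: eq_bigr => i _; rewrite mulrA.
    ring.
  + by rewrite /= H12 -mulr_sumr; ring.
- move=> r r' H1 H2 _ [y1 [n1 [m1 [Hy1 Hn1 Hm1 H11 H12]]]].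
  exists y1, n1, m1; split => //.
  + by move=> j; rewrite -H1.
  + by rewrite -H2.
Qed.

Lemma lpA_sum (R : realFieldType) (k : nat) (E : rel 'I_k) (lam : 'I_k -> nat) (yy : 'I_k -> R) j :
  symmetric E ->
  \sum_i yy i * lpA R E lam i j = (lam j)%:R * yy j + \sum_(i in nonnbrs E j) yy i.
Proof.
move=> Esym.
rewrite /lpA (eq_bigr (fun i => yy i * (if j == i then (lam i)%:R else 0) +
                           yy i * (if j \in nonnbrs E i then 1 else 0)));
  last by move=> i _; rewrite mulrDr.
rewrite big_split /=; congr (_ + _).
  rewrite (bigD1 j) //= eqxx big1 ?addr0; first by rewrite mulrC.
  by move=> i; rewrite eq_sym => /negbTE ->; rewrite mulr0.
rewrite [RHS]big_mkcond /=; apply: eq_bigr => i _.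
have -> : (j \in nonnbrs E i) = (i \in nonnbrs E j).
  by rewrite /nonnbrs !inE eq_sym Esym.
by case: ifP; rewrite ?mulr1 ?mulr0.
Qed.

Lemma sum_nonnbrs (R : realFieldType) (k : nat) (E : rel 'I_k) (x : 'I_k -> R) i :
  \sum_j (if j \in nonnbrs E i then 1 else 0) * x j = \sum_(j in nonnbrs E i) x j.
Proof.
rewrite [RHS]big_mkcond /=; apply: eq_bigr => j _.
by case: ifP; rewrite ?mul1r ?mul0r.
Qed.

Lemma zeta_bound (R : realType) (d k : nat) (E : rel 'I_k) (lam : 'I_k -> nat) :
  symmetric E -> irreflexive E -> (forall i, (2 <= lam i)%N) ->
  (forall C : {set 'I_k}, (1 < #|C|)%N -> gclique E C ->
      \sum_(i in C) ((lam i)%:R + 1) <= d%:R :> R) ->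
  (forall i, (lam i <= d)%N) ->
  @zeta R k E lam <= (5 / 8) * d%:R + (1 / 8) * k%:R.
Proof.
move=> Esym Eirr lam2 Hcl Hld.
set B : R := (5 / 8) * d%:R + (1 / 8) * k%:R.
have Hex : exists x, lp_feasible E lam x /\ lp_objective lam x <= B.
  apply: NNPP => Hno.
  have Hinf : forall xn : nat -> R, exists u,
      \sum_(j < k) (lprow E lam B u).1 j * xn j < (lprow E lam B u).2.
    move=> xn; apply: NNPP => Hn.
    have Hge : forall u, (lprow E lam B u).2 <= \sum_(j < k) (lprow E lam B u).1 j * xn j.
      by move=> u; rewrite leNgt; apply/negP => H; apply: Hn; exists u.
    apply: Hno; exists (fun i : 'I_k => xn i); split.
    - move=> i; split.
      + have := Hge (inl (inl i)); rewrite /= fm_ext_sum (bigD1 i) //= eqxx mul1r big1 ?addr0 //.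
        by move=> j /negbTE ->; rewrite mul0r.
      + have := Hge (inl (inr i)); rewrite /= fm_ext_sum /lpA.
        rewrite (eq_bigr (fun j => (if j == i then (lam i)%:R else 0) * xn j +
                                  (if j \in nonnbrs E i then 1 else 0) * xn j));
          last by move=> j _; rewrite mulrDl.
        rewrite big_split /= (sum_nonnbrs E (fun j : 'I_k => xn j)) (bigD1 i) //= eqxx big1 ?addr0 //.
        by move=> j /negbTE ->; rewrite mul0r.
    - have := Hge (inr tt); rewrite /= fm_ext_sum /lp_objective.
      rewrite (eq_bigr (fun j => - ((lam j)%:R * xn j))); last by move=> j _; rewrite mulNr.
      by rewrite sumrN lerN2.
  have Hsup : forall u j, (k <= j)%N -> (lprow E lam B u).1 j = 0.
    by move=> [[i|i]|t] j kj /=; rewrite fm_ext0.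
  have [b [b0 Hb]] := fm_main Hsup Hinf.
  have [yy [nu [mu [Hy Hnu Hmu H1 H2]]]] := lprep_cone Hb.
  have Hd : forall j, (lam j)%:R * yy j + \sum_(i in nonnbrs E j) yy i <= mu * (lam j)%:R.
    move=> j; have := H1 j; rewrite /= lpA_sum // => H.
    have := Hnu j; lra.
  move: H2 => /= H2.
  have Hsy : 0 <= \sum_i yy i by apply: sumr_ge0.
  case: (ltrgtP mu 0) => Hmu'.
  - by move: Hmu; rewrite leNgt Hmu'.
  - pose z i := yy i / mu.
    have Hz0 : forall i, 0 <= z i by move=> i; rewrite /z divr_ge0 // ltW.
    have Hzd : forall j, (lam j)%:R * z j + \sum_(i in nonnbrs E j) z i <= (lam j)%:R.
      move=> j; rewrite /z -mulr_suml mulrA -mulrDl ler_pdivrMr //.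
      by rewrite [_ * mu]mulrC; apply: Hd.
    have := @dual_bound R k E lam z Esym Eirr lam2 Hz0 Hzd k [set: 'I_k] d%:R.
    rewrite cardsT card_ord leqnn ler0n => /(_ isT isT) Hdb.
    have Hdb' : \sum_(i in [set: 'I_k]) z i <= (5 * d%:R + k%:R) / 8.
      apply: Hdb.
      + by move=> C _ C1 HC; apply: Hcl.
      + by move=> i _; rewrite ler_nat.
    have : \sum_i yy i = mu * \sum_(i in [set: 'I_k]) z i.
      rewrite mulr_sumr; apply: eq_big => [i|i _]; first by rewrite inE.
      by rewrite /z mulrC divfK // gt_eqF.
    move=> Hs.
    have : \sum_i yy i <= mu * B.
      rewrite Hs ler_pM2l //; apply: le_trans Hdb' _; rewrite /B; lra.
    lra.
  - move: H2; rewrite Hmu' mul0r subr0 => H2.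
    have : forall j, yy j = 0.
      move=> j; have := Hd j; rewrite Hmu' mul0r => H.
      have : 0 <= \sum_(i in nonnbrs E j) yy i by apply: sumr_ge0.
      have := Hy j; have : 2 <= (lam j)%:R :> R by rewrite (ler_nat R 2).
      nra.
    move=> Y0; move: H2; rewrite big1 // => H2; lra.
have [x [Hx Hobj]] := Hex.
apply: le_trans Hobj.
apply: ge_inf; last by exists x.
exists 0 => z [x' Hx' <-].
rewrite /lp_objective; apply: sumr_ge0 => i _.
by apply: mulr_ge0; [exact: ler0n | case: (Hx' i)].
Qed.


Definition dotm (R : realType) (d : nat) (u v : 'rV[R]_d) : R := (u *m v^T) 0 0.

Lemma dotmE (R : realType) (d : nat) (u v : 'rV[R]_d) :
  dotm u v = \sum_j u 0 j * v 0 j.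
Proof. by rewrite /dotm mxE; apply: eq_bigr => j _; rewrite mxE. Qed.

Lemma dotmC (R : realType) (d : nat) (u v : 'rV[R]_d) : dotm u v = dotm v u.
Proof. by rewrite !dotmE; apply: eq_bigr => j _; rewrite mulrC. Qed.

Lemma dotm_subsub (R : realType) (d : nat) (a b c e : 'rV[R]_d) :
  dotm (a - b) (c - e) = dotm a c - dotm a e - dotm b c + dotm b e.
Proof.
rewrite !dotmE -!sumrB -big_split /=; apply: eq_bigr => j _; rewrite !mxE; ring.
Qed.

Lemma dotmDl (R : realType) (d : nat) (a b c : 'rV[R]_d) :
  dotm (a + b) c = dotm a c + dotm b c.
Proof. by rewrite !dotmE -big_split; apply: eq_bigr => j _; rewrite !mxE mulrDl. Qed.

Lemma dotmDr (R : realType) (d : nat) (a b c : 'rV[R]_d) :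
  dotm c (a + b) = dotm c a + dotm c b.
Proof. by rewrite dotmC dotmDl !(dotmC c). Qed.

Lemma dotm_ge0 (R : realType) (d : nat) (u : 'rV[R]_d) : 0 <= dotm u u.
Proof. by rewrite dotmE sumr_ge0 // => j _; rewrite -expr2 sqr_ge0. Qed.

Lemma dotm_eq0 (R : realType) (d : nat) (u : 'rV[R]_d) : dotm u u = 0 -> u = 0.
Proof.
rewrite dotmE => H; apply/rowP => j; rewrite mxE.
have H0 : forall j, predT j -> 0 <= u 0 j * u 0 j by move=> l _; rewrite -expr2 sqr_ge0.
have := psumr_eq0P H0 H (i:=j) isT.
by move/eqP; rewrite mulf_eq0 orbb => /eqP.
Qed.

Lemma eucl_normE (R : realType) (d : nat) (u : 'rV[R]_d) :
  eucl_norm u = Num.sqrt (dotm u u).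
Proof. by rewrite /eucl_norm dotmE; congr Num.sqrt; apply: eq_bigr => j _; rewrite expr2. Qed.

Lemma eucl_norm_eq (R : realType) (d : nat) (u v : 'rV[R]_d) :
  dotm u u = dotm v v -> eucl_norm u = eucl_norm v.
Proof. by rewrite !eucl_normE => ->. Qed.

Lemma eucl_norm1 (R : realType) (d : nat) (u : 'rV[R]_d) :
  eucl_norm u = 1 -> dotm u u = 1.
Proof.
rewrite eucl_normE => H.
by rewrite -(sqr_sqrtr (dotm_ge0 u)) H expr1n.
Qed.

Lemma eucl_norm0 (R : realType) (d : nat) (u : 'rV[R]_d) :
  eucl_norm u = 0 -> u = 0.
Proof.
rewrite eucl_normE => H; apply: dotm_eq0.
by rewrite -(sqr_sqrtr (dotm_ge0 u)) H expr0n.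
Qed.

Lemma unit_dist_orth (R : realType) (d : nat) (p q p' q' : 'rV[R]_d) :
  eucl_norm (p - p') = 1 -> eucl_norm (p - q') = 1 ->
  eucl_norm (q - p') = 1 -> eucl_norm (q - q') = 1 ->
  dotm (p - q) (p' - q') = 0.
Proof.
move=> /eucl_norm1 H1 /eucl_norm1 H2 /eucl_norm1 H3 /eucl_norm1 H4.
move: H1 H2 H3 H4; rewrite !dotm_subsub.
rewrite (dotmC p' p) (dotmC q' p) (dotmC p' q) (dotmC q' q).
lra.
Qed.

Lemma orth_sub (R : realType) (d m n : nat) (A : 'M[R]_(m, d)) (B : 'M[R]_(n, d))
  (u v : 'rV[R]_d) :
  A *m B^T = 0 -> (u <= A)%MS -> (v <= B)%MS -> dotm u v = 0.
Proof.
move=> AB /submxP [w1 ->] /submxP [w2 ->].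
by rewrite /dotm trmx_mul mulmxA -(mulmxA w1) AB mulmx0 mul0mx mxE.
Qed.


Lemma sphere_of (R : realType) (d m : nat) (B : 'M[R]_(m.+1, d)) (A : {fset 'rV[R]_d})
  (b p' : 'rV[R]_d) :
  row_free B -> b \in A -> (forall p, p \in A -> (p - b <= B)%MS) ->
  (forall p, p \in A -> eucl_norm (p - p') = 1) ->
  (exists q, q \in A /\ q != b) -> in_sphere_dim m A.
Proof.
move=> HB bA HAB Hd [q [qA qb]].
set G := B *m B^T.
have Gu : G \in unitmx.
  rewrite -row_free_unit; apply: inj_row_free => v Hv.
  have : dotm (v *m B) (v *m B) = 0.
    by rewrite /dotm trmx_mul mulmxA -(mulmxA v) -/G Hv mul0mx mxE.
  move/dotm_eq0 => vB0; apply: (row_free_inj HB); by rewrite /= vB0 mul0mx.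
set w := p' - b.
set pr := w *m B^T *m invmx G *m B.
have Hpr : (pr - w) *m B^T = 0.
  rewrite mulmxBl /pr -(mulmxA _ B) -/G -mulmxA mulVmx // mulmx1 subrr //.
have prB : (pr <= B)%MS by rewrite /pr submxMl.
set c := b + pr.
have HcB : forall p, p \in A -> (p - c <= B)%MS.
  move=> p pA; rewrite /c opprD addrA.
  apply: addmx_sub; first exact: HAB.
  by rewrite /pr -mulNmx submxMl.
have Horth : forall p, p \in A -> dotm (p - c) (c - p') = 0.
  move=> p pA.
  have -> : c - p' = pr - w by rewrite /c /w; rewrite opprB addrA [b + pr]addrC -addrA addrA.
  apply: (orth_sub (A := B) (B := pr - w)); last exact: submx_refl.
  - by rewrite -[B]trmxK -trmx_mul Hpr trmx0.
  - exact: HcB.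
have Hpyth : forall p, p \in A ->
    dotm (p - c) (p - c) = 1 - dotm (c - p') (c - p').
  move=> x xA.
  have := eucl_norm1 (Hd x xA).
  have -> : x - p' = (x - c) + (c - p') by rewrite addrA subrK.
  rewrite (dotmDl (x - c) (c - p')) !(dotmDr (x - c) (c - p')) (dotmC (c - p') (x - c)) Horth //.
  lra.
exists c, B, (eucl_norm (b - c)); split.
- by apply/eqP.
- rewrite lt_def; apply/andP; split; last by rewrite eucl_normE sqrtr_ge0.
  apply/negP => /eqP H0.
  have bc : b - c = 0 by apply: eucl_norm0.
  have : dotm (q - c) (q - c) = 0.
    by rewrite Hpyth // -(Hpyth b bA) bc dotmE big1 // => j _; rewrite mxE mul0r.
  move/dotm_eq0 => qc.
  move: qb; rewrite -subr_eq0.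
  have -> : q - b = (q - c) - (b - c) by rewrite opprB addrA subrK.
  by rewrite qc bc subrr eqxx.
- move=> p pA; split; first exact: HcB.
  by apply: eucl_norm_eq; rewrite !Hpyth.
Qed.


Definition Gm (R : realType) (d : nat) (A : {fset 'rV[R]_d}) (b : 'rV[R]_d) :
  'M[R]_(size (enum_fset A), d) :=
  \matrix_(t < size (enum_fset A)) (nth 0 (enum_fset A) t - b).

Lemma Gm_row (R : realType) (d : nat) (A : {fset 'rV[R]_d}) (b p : 'rV[R]_d) :
  p \in A -> (p - b <= Gm A b)%MS.
Proof.
move=> pA.
have pS : p \in enum_fset A by [].
have Hi : (index p (enum_fset A) < size (enum_fset A))%N by rewrite index_mem.
apply: (eq_row_sub (Ordinal Hi)).
by rewrite /Gm rowK /= nth_index.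
Qed.

Lemma Gm_rows (R : realType) (d : nat) (A : {fset 'rV[R]_d}) (b : 'rV[R]_d) t :
  exists p, p \in A /\ row t (Gm A b) = p - b.
Proof.
exists (nth 0 (enum_fset A) t); split; last by rewrite /Gm rowK.
have : nth 0 (enum_fset A) t \in enum_fset A by apply: mem_nth.
by [].
Qed.

Lemma mulmx_tr_entry (R : realType) (d m n : nat) (A : 'M[R]_(m, d)) (B : 'M[R]_(n, d)) t t' :
  (A *m B^T) t t' = dotm (row t A) (row t' B).
Proof. by rewrite mxE dotmE; apply: eq_bigr => j _; rewrite !mxE. Qed.

Lemma dotm_sumr (R : realType) (d : nat) (I : finType) (P : pred I) (u : 'rV[R]_d)
  (v : I -> 'rV[R]_d) :
  dotm u (\sum_(j | P j) v j) = \sum_(j | P j) dotm u (v j).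
Proof.
apply: (big_rec2 (fun a b => dotm u b = a)).
  by rewrite dotmE big1 // => j _; rewrite mxE mulr0.
by move=> j a b _ <-; rewrite dotmDr.
Qed.

Lemma rank_lb (R : realType) (d : nat) (A : {fset 'rV[R]_d}) (b p' : 'rV[R]_d) (lam : nat) :
  b \in A -> (forall p, p \in A -> eucl_norm (p - p') = 1) ->
  (exists q, q \in A /\ q != b) ->
  (forall l, (l < lam)%N -> ~ in_sphere_dim l A) ->
  (lam < \rank (Gm A b))%N.
Proof.
move=> bA Hd Hq Hmin.
have key : forall m (B : 'M[R]_(m, d)), row_free B -> (Gm A b :=: B)%MS -> (lam < m)%N.
  case=> [|m] B HB Heq.
    case: Hq => q [qA qb].
    have : (q - b <= B)%MS by rewrite -Heq; apply: Gm_row.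
    rewrite (flatmx0 B) => /submx0null /eqP; rewrite subr_eq0 => /eqP qbe.
    by move: qb; rewrite qbe eqxx.
  have HAB : forall p, p \in A -> (p - b <= B)%MS by move=> p pA; rewrite -Heq; apply: Gm_row.
  have Hs := sphere_of HB bA HAB Hd Hq.
  rewrite ltnS leqNgt; apply/negP => H; exact: (Hmin m H Hs).
apply: key (row_base_free _) _.
exact: eqmx_sym (eq_row_base _).
Qed.


Lemma clique_rank (R : realType) (d k : nat) (C : {set 'I_k}) (Ms : 'I_k -> 'M[R]_d) :
  (forall i j, i \in C -> j \in C -> i != j -> forall u v : 'rV[R]_d,
      (u <= Ms i)%MS -> (v <= Ms j)%MS -> dotm u v = 0) ->
  (\sum_(i in C) \rank (Ms i) <= d)%N.
Proof.
move=> Horth.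
have Hdir : mxdirect (\sum_(i in C) Ms i).
  apply/mxdirect_sumsP => i iC.
  apply/row_matrixP => r; rewrite row0.
  set Z := (Ms i :&: _)%MS.
  have uZ : (row r Z <= Z)%MS := row_sub r Z.
  have ui : (row r Z <= Ms i)%MS := submx_trans uZ (capmxSl _ _).
  have us := submx_trans uZ (capmxSr _ _).
  case/sub_sumsmxP: us => w Hw.
  apply: dotm_eq0.
  rewrite {2}Hw dotm_sumr big1 // => j /andP [jC ji].
  apply: (Horth i j iC jC) => //; first by rewrite eq_sym.
  exact: submxMl.
move: Hdir; rewrite mxdirectE /= => /eqP <-.
exact: rank_leq_col.
Qed.

Lemma geom_facts (R : realType) (d k : nat) (E : rel 'I_k) (lam : 'I_k -> nat)
  (P : 'I_k -> {fset 'rV[R]_d}) :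
  symmetric E -> (forall i, (2 <= lam i)%N) -> has_profile P lam -> compatible E P ->
  (forall i, (lam i <= d)%N) /\
  (forall C : {set 'I_k}, (1 < #|C|)%N ->
     (forall i j, i \in C -> j \in C -> i != j -> E i j) ->
     (\sum_(i in C) (lam i).+1 <= d)%N).
Proof.
move=> Esym lam2 Hprof Hcomp.
have Hinfo : forall i, [/\ (3 < size (enum_fset (P i)))%N, (lam i <= d)%N &
                forall l, (l < lam i)%N -> ~ in_sphere_dim l (P i)].
  move=> i; have := Hprof i; rewrite /profile_value; case: ifP => [_ H|].
  - by have := lam2 i; rewrite H.
  - by move/negbT; rewrite -ltnNge => H3 [H1 _ H2]; split.
split; first by move=> i; case: (Hinfo i).
move=> C C1 HC.
pose b i := nth 0 (enum_fset (P i)) 0.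
have bP : forall i, b i \in P i.
  move=> i; case: (Hinfo i) => H3 _ _.
  have : b i \in enum_fset (P i) by apply: mem_nth; apply: leq_trans H3.
  by [].
have Hq : forall i, exists q, q \in P i /\ q != b i.
  move=> i; case: (Hinfo i) => H3 _ _.
  exists (nth 0 (enum_fset (P i)) 1); split.
    have : nth 0 (enum_fset (P i)) 1 \in enum_fset (P i) by apply: mem_nth; apply: leq_trans H3.
    by [].
  rewrite /b nth_uniq //; first exact: leq_trans H3.
  exact: leq_trans H3.
pose Ms i := <<Gm (P i) (b i)>>%MS.
have Horth0 : forall i j, E i j -> Gm (P i) (b i) *m (Gm (P j) (b j))^T = 0.
  move=> i j Eij; apply/matrixP => t t'; rewrite mulmx_tr_entry mxE.
  have [p [pP ->]] := Gm_rows (b i) t.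
  have [q [qP ->]] := Gm_rows (b j) t'.
  apply: unit_dist_orth; apply: (Hcomp i j Eij) => //.
have Horth : forall i j, i \in C -> j \in C -> i != j -> forall u v : 'rV[R]_d,
      (u <= Ms i)%MS -> (v <= Ms j)%MS -> dotm u v = 0.
  move=> i j iC jC ij u v; rewrite /Ms !genmxE => Hu Hv.
  exact: (orth_sub (Horth0 i j (HC i j iC jC ij)) Hu Hv).
have Hrank : forall i, i \in C -> ((lam i).+1 <= \rank (Ms i))%N.
  move=> i iC.
  have : (0 < #|C :\ i|)%N by move: C1; rewrite (cardsD1 i C) iC.
  rewrite card_gt0 => /set0Pn [j]; rewrite !inE => /andP [ji jC].
  have Eij : E i j by apply: HC => //; rewrite eq_sym.
  case: (Hinfo i) => _ _ Hmin.
  rewrite /Ms genmxE.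
  apply: (rank_lb (p' := b j) (bP i) _ (Hq i) Hmin).
  by move=> p pP; apply: (Hcomp i j Eij).
apply: leq_trans (clique_rank Horth).
by apply: leq_sum => i iC; apply: Hrank.
Qed.


Unset Implicit Arguments.

Theorem theorem5p5 (R : realType) (d k : nat) (E : rel 'I_k) (lam : 'I_k -> nat) :
  symmetric E -> irreflexive E ->
  @realisable R d k E lam ->
  (forall i, (2 <= lam i)%N) ->
  @zeta R k E lam <= (5 / 8) * d%:R + (1 / 8) * k%:R :> R.
Proof.
move=> Esym Eirr [P [Hprof Hcomp]] lam2.
have [Hld Hcl] := geom_facts Esym lam2 Hprof Hcomp.
apply: zeta_bound => // C C1 HC.
have := Hcl C C1 HC; rewrite -(ler_nat R) natr_sum => H; apply: le_trans H.
by rewrite le_eqVlt; apply/orP; left; apply/eqP; apply: eq_bigr => i _; rewrite natr1.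
Qed.
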